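(* Let $\mathcal{H}$ be a complex Hilbert space, let $A\in\mathcal{B}(\mathcal{H})$ be positive, let $S\in\mathcal{B}_A(\mathcal{H})$ and let $\alpha\in\mathbb{C}$ with $\alpha\neq 0$. Then $$d\omega_A^2(S)\le \omega_A^2\left(S^{\sharp_A}S+S\right)+\frac{2}{|\alpha|}\,\omega_A\left(S^{\sharp_A}S^2\right)+\frac{\max\{1,|\alpha-1|\}}{|\alpha|}\left\|\left(S^{\sharp_A}S\right)^2+S^{\sharp_A}S\right\|_A .$$
   Context: $\mathcal{B}(\mathcal{H})$ denotes the bounded linear operators on $\mathcal{H}$. For positive $A$, set $\langle x,z\rangle_A=\langle Ax,z\rangle$ and $\|z\|_A=\|A^{1/2}z\|=\sqrt{\langle z,z\rangle_A}$ (a seminorm). $\mathcal{B}_A(\mathcal{H})$ is the set of $S\in\mathcal{B}(\mathcal{H})$ admitting an $A$-adjoint, i.e. for which there is $R\in\mathcal{B}(\mathcal{H})$ with $AR=S^*A$ (equivalently $\mathcal{R}(S^*A)\subseteq\mathcal{R}(A)$). For $S\in\mathcal{B}_A(\mathcal{H})$, $S^{\sharp_A}=A^{\dagger}S^*A$, where $A^\dagger$ is the Moore–Penrose inverse of $A$; it satisfies $AS^{\sharp_A}=S^*A$ and $\mathcal{R}(S^{\sharp_A})\subseteq\overline{\mathcal{R}(A)}$. For operators $T$ with $\|Tz\|_A\le c\|z\|_A$ for all $z$: $\|T\|_A=\sup\{\|Tz\|_A:\|z\|_A=1\}$, $\omega_A(T)=\sup\{|\langle Tz,z\rangle_A|:\|z\|_A=1\}$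 ($A$-numerical radius), and $d\omega_A(T)=\sup\{(|\langle Tz,z\rangle_A|^2+\|Tz\|_A^4)^{1/2}:\|z\|_A=1\}$ ($A$-Davis–Wielandt radius). *)

(* Defs.v *)
From HB Require Import structures.
From mathcomp Require Import all_boot all_order all_algebra.
From mathcomp Require Import complex.
From mathcomp Require Import boolp classical_sets reals.
Set Implicit Arguments. Unset Strict Implicit. Unset Printing Implicit Defensive.
Import Order.TTheory GRing.Theory Num.Theory.
Local Open Scope ring_scope.
Local Open Scope classical_set_scope.

Section HilbertDefs.
Variable R : realType.
Variable V : lmodType R[i].
Variable ip : V -> V -> R[i].   (* inner product, linear in the first argument *)

Definition hnorm (x : V) : R := Num.sqrt (complex.Re (ip x x)).

Definition is_inner_product : Prop :=
  [/\ (forall (a : R[i]) (x y z : V), ip (a *: x + y) z = a * ip x z + ip y z),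
      (forall x y : V, ip y x = conjc (ip x y)),
      (forall x : V, 0 <= ip x x)
    & (forall x : V, ip x x = 0 -> x = 0)].

Definition ip_complete : Prop :=
  forall u : nat -> V,
    (forall e : R, 0 < e -> exists N : nat, forall m n : nat,
        (N <= m)%N -> (N <= n)%N -> hnorm (u m - u n) < e) ->
    exists l : V, forall e : R, 0 < e -> exists N : nat, forall n : nat,
        (N <= n)%N -> hnorm (u n - l) < e.

Definition hilbert_space : Prop := is_inner_product /\ ip_complete.

Definition bounded_op (T : V -> V) : Prop :=
  (forall (a : R[i]) (x y : V), T (a *: x + y) = a *: T x + T y) /\
  exists c : R, forall x : V, hnorm (T x) <= c * hnorm x.

Definition is_adjoint (T Tstar : V -> V) : Prop :=
  forall x y : V, ip (T x) y = ip x (Tstar y).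

Definition positive_op (A : V -> V) : Prop :=
  bounded_op A /\ forall x : V, 0 <= ip (A x) x.

Definition in_closure_range (A : V -> V) (y : V) : Prop :=
  forall e : R, 0 < e -> exists x : V, hnorm (y - A x) < e.

Variable A : V -> V.

Definition ipA (x z : V) : R[i] := ip (A x) z.
Definition normA (z : V) : R := Num.sqrt (complex.Re (ipA z z)).

Definition opnormA (T : V -> V) : R :=
  sup [set r : R | exists z : V, normA z = 1 /\ r = normA (T z)].
Definition omegaA (T : V -> V) : R :=
  sup [set r : R | exists z : V, normA z = 1 /\ r = Normc.normc (ipA (T z) z)].
Definition dwA (T : V -> V) : R :=
  sup [set r : R | exists z : V, normA z = 1 /\
       r = Num.sqrt (Normc.normc (ipA (T z) z) ^+ 2 + normA (T z) ^+ 4)].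

(* Ssh = S^{#_A}: the A-adjoint A^+ S^* A of S, characterised as the unique
   bounded R with A R = S^* A and range(R) in the closure of range(A). *)
Definition is_A_sharp (S Sstar Ssh : V -> V) : Prop :=
  [/\ bounded_op Ssh,
      (forall x : V, A (Ssh x) = Sstar (A x))
    & (forall x : V, in_closure_range A (Ssh x))].

End HilbertDefs.

(* Main.v *)
Require Import Defs.
From HB Require Import structures.
From mathcomp Require Import all_boot all_order all_algebra.
From mathcomp Require Import complex.
From mathcomp Require Import boolp classical_sets reals.
From mathcomp Require Import ring lra.
Import Order.TTheory GRing.Theory Num.Theory.
Local Open Scope ring_scope.
Local Open Scope complex_scope.
Set Implicit Arguments. Unset Strict Implicit.

Section T.
Context {R : realType}.
Implicit Types (z w : R[i]).
Lemma ge0_real z : 0 <= z -> z = (complex.Re z)%:C.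
Proof. by case: z => a b; rewrite lecE /= => /andP[/eqP -> _]. Qed.
Lemma ge0_Re z : 0 <= z -> 0 <= complex.Re z.
Proof. by case: z => a b; rewrite lecE /= => /andP[_ ->]. Qed.
Lemma normc_ge0 z : 0 <= Normc.normc z.
Proof. by case: z => a b; exact: sqrtr_ge0. Qed.
Lemma normc_sqr z : Normc.normc z ^+ 2 = complex.Re z ^+ 2 + complex.Im z ^+ 2.
Proof. by case: z => a b /=; rewrite sqr_sqrtr // addr_ge0 // sqr_ge0. Qed.

Lemma ReD z w : complex.Re (z + w) = complex.Re z + complex.Re w.
Proof. by case: z; case: w. Qed.
Lemma Re_le_normc z : complex.Re z <= Normc.normc z.
Proof.
case: z => a b /=; apply: le_trans (ler_norm a) _.
rewrite -sqrtr_sqr; apply: ler_wsqrtr; rewrite lerDl; exact: sqr_ge0.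
Qed.

Lemma Re_conj z : complex.Re (conjc z) = complex.Re z.
Proof. by case: z. Qed.

Lemma subr_ge0_alt {x y : R} : x <= y -> 0 <= y - x.
Proof. by rewrite subr_ge0. Qed.

Lemma CSreal (a m c : R) : (forall r, 0 <= a - 2 * r * m + r ^+ 2 * m * c) -> 0 <= c -> 0 <= m -> m <= a * c.
Proof.
move=> H c0 m0; have [cp|cn] := ltrP 0 c.
  have := H c^-1; rewrite expr2 => h.
  have e : a - 2 * c^-1 * m + c^-1 * c^-1 * m * c = (a * c - m) / c.
    by field; rewrite gt_eqF.
  rewrite e in h; have := mulr_ge0 h (ltW cp); rewrite divfK ?gt_eqF //; lra.
have c00 : c = 0 by apply/eqP; rewrite eq_le cn c0.
subst c; rewrite mulr0; have [mp|//] := ltrP 0 m.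
have := H ((a + 1) / (2 * m)).
have e : a - 2 * ((a + 1) / (2 * m)) * m + ((a + 1) / (2 * m)) ^+ 2 * m * 0 = -1.
  by field; rewrite gt_eqF.
rewrite e; lra.
Qed.

Lemma pt (x y c D : R) : 0 <= x -> 0 < y -> 1 <= c -> 0 <= D ->
  (forall k, (x ^+ (2 ^ k) * y) ^+ 2 <= D * (c ^+ (2 ^ k)) ^+ 2 * (y ^+ (2 ^ k)) ^+ 2) ->
  x <= 2 * c * y.
Proof.
move=> x0 y0 c1 D0 H; rewrite leNgt; apply/negP => hx.
pose k := Num.bound (D / y ^+ 2).
have hk : D / y ^+ 2 < k%:R by apply: archi_boundP; rewrite divr_ge0 // sqr_ge0.
have hkD : D < k%:R * y ^+ 2.
  by rewrite -ltr_pdivrMr ?exprn_gt0.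
pose N := (2 ^ k)%N.
have c0 : 0 < c by apply: lt_le_trans ltr01 c1.
have hN : (k <= (2 ^ N) ^ 2)%N.
  apply: leq_trans (ltnW (ltn_expl k (ltnSn 1))) _.
  apply: leq_trans (ltnW (ltn_expl N (ltnSn 1))) _.
  by rewrite expnS expn1 leq_pmulr // expn_gt0.
have hcy : 0 < (c ^+ N * y ^+ N) ^+ 2 by rewrite exprn_gt0 // mulr_gt0 // exprn_gt0.
have h1 : (2 * c * y) ^+ N < x ^+ N.
  have p0 : 0 <= 2 * c * y by rewrite !mulr_ge0 // ltW.
  by rewrite (ltrXn2r N p0 hx) /N expn_eq0.
have h2 : ((2 ^+ N) * (c ^+ N * y ^+ N)) * y < x ^+ N * y.
  by rewrite ltr_pM2r // mulrA -!exprMn.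
have h3 : (((2 ^+ N) * (c ^+ N * y ^+ N)) * y) ^+ 2 < (x ^+ N * y) ^+ 2.
  have p0 : 0 <= ((2 ^+ N) * (c ^+ N * y ^+ N)) * y.
    by rewrite !mulr_ge0 ?exprn_ge0 // ltW.
  by rewrite (ltrXn2r 2 p0 h2).
have h4 := lt_le_trans h3 (H k).
have h5 : ((2 ^+ N) ^+ 2 * y ^+ 2) * (c ^+ N * y ^+ N) ^+ 2 < D * (c ^+ N * y ^+ N) ^+ 2.
  move: h4; rewrite !exprMn -/N; congr (_ < _); ring.
rewrite ltr_pM2r // in h5.
have h6 : k%:R <= (2 ^+ N) ^+ 2 :> R.
  by rewrite -natrX -natrX ler_nat.
have : k%:R * y ^+ 2 <= (2 ^+ N) ^+ 2 * y ^+ 2.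
  by rewrite ler_pM2r // exprn_gt0.
lra.
Qed.

Lemma sup_ge0' (E : set R) : (forall r, E r -> 0 <= r) -> 0 <= sup E.
Proof.
move=> H; case: (pselect (has_sup E)) => [[[r Er] hub]|nh]; last by rewrite sup_out.
exact: le_trans (H r Er) (ub_le_sup hub Er).
Qed.

Lemma ReN z : complex.Re (- z) = - complex.Re z.
Proof. by case: z. Qed.

Lemma real_step (s : R[i]) (t : R) : 0 <= t ->
  Normc.normc s ^+ 2 + t ^+ 2 <= Normc.normc (t%:C + s) ^+ 2 + 2 * t * Normc.normc s.
Proof.
move=> t0; have h := Re_le_normc (- s); rewrite normcN ReN in h.
have e := normc_sqr s; have n0 := normc_ge0 s.
rewrite [Normc.normc (_ + _) ^+ 2]normc_sqr.
have -> : complex.Re (t%:C + s) = t + complex.Re s by case: s {e h n0}.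
have -> : complex.Im (t%:C + s) = complex.Im s by case: s {e h n0} => a b /=; rewrite add0r.
move: (Normc.normc s) (complex.Re s) (complex.Im s) e h n0 => n s1 s2 e h n0.
have : 0 <= t * (n + s1) by apply: mulr_ge0 => //; lra.
rewrite e; nra.
Qed.

Lemma normcR (t : R) : Normc.normc t%:C = `|t|.
Proof. by rewrite /= expr0n /= addr0 sqrtr_sqr. Qed.

Lemma combine (ns t na m a b w2 W2 N : R) : 0 <= t -> 0 <= ns -> 0 < na -> 0 <= m ->
  na * (ns * t) <= m * a * b + w2 -> w2 <= W2 -> 2 * a * b <= N ->
  2 * t * ns <= 2 / na * W2 + m / na * N.
Proof.
move=> t0 ns0 na0 m0 h1 h2 h3.
have -> : 2 * t * ns = (2 * (na * (ns * t))) / na by field; rewrite gt_eqF.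
have -> : 2 / na * W2 + m / na * N = (2 * W2 + m * N) / na by field; rewrite gt_eqF.
rewrite ler_pM2r ?invr_gt0 //.
have : m * (2 * a * b) <= m * N by apply: ler_wpM2l.
nra.
Qed.
End T.

Section Form.
Variables (R : realType) (V : lmodType R[i]) (f : V -> V -> R[i]).
Hypothesis flin : forall (a : R[i]) x y z, f (a *: x + y) z = a * f x z + f y z.
Hypothesis fherm : forall x y, f y x = conjc (f x y).
Hypothesis fpos : forall x, 0 <= f x x.

Lemma f0l z : f 0 z = 0.
Proof.
have h := flin 1 0 0 z; rewrite scaler0 addr0 mul1r in h.
by have := congr1 (fun t => t - f 0 z) h; rewrite addrK subrr => <-.
Qed.
Lemma fDl x y z : f (x + y) z = f x z + f y z.
Proof. by have := flin 1 x y z; rewrite scale1r mul1r. Qed.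
Lemma fZl a x z : f (a *: x) z = a * f x z.
Proof. by have := flin a x 0 z; rewrite !addr0 f0l addr0. Qed.
Lemma fNl x z : f (- x) z = - f x z.
Proof. by rewrite -scaleN1r fZl mulN1r. Qed.
Lemma fBl x y z : f (x - y) z = f x z - f y z.
Proof. by rewrite fDl fNl. Qed.
Lemma fDr x y z : f z (x + y) = f z x + f z y.
Proof. by rewrite fherm fDl rmorphD /= -!fherm. Qed.
Lemma fZr a x z : f z (a *: x) = conjc a * f z x.
Proof. by rewrite fherm fZl rmorphM /= -fherm. Qed.
Lemma fNr x z : f z (- x) = - f z x.
Proof. by rewrite fherm fNl rmorphN /= -fherm. Qed.
Lemma fBr x y z : f z (x - y) = f z x - f z y.
Proof. by rewrite fDr fNr. Qed.

Definition nf x := Num.sqrt (complex.Re (f x x)).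
Lemma freal x : f x x = (complex.Re (f x x))%:C.
Proof. exact: ge0_real. Qed.
Lemma fRe_ge0 x : 0 <= complex.Re (f x x).
Proof. exact: ge0_Re. Qed.
Lemma nf_ge0 x : 0 <= nf x.
Proof. exact: sqrtr_ge0. Qed.
Lemma nf_sqr x : nf x ^+ 2 = complex.Re (f x x).
Proof. by rewrite sqr_sqrtr // fRe_ge0. Qed.

Lemma CS2 x y : Normc.normc (f x y) ^+ 2 <= complex.Re (f x x) * complex.Re (f y y).
Proof.
rewrite normc_sqr; apply: CSreal; last 2 first.
- exact: fRe_ge0.
- by rewrite addr_ge0 ?sqr_ge0.
move=> r.
pose t := - (r%:C * f x y).
have e : f (x + t *: y) (x + t *: y) = f x x + conjc t * f x y + t * conjc (f x y) + t * conjc t * f y y.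
  rewrite !fDl !fDr !fZl !fZr (fherm x y); ring.
have := fRe_ge0 (x + t *: y); rewrite e /t.
rewrite (freal x) (freal y).
case: (f x y) => p1 p2; move: (complex.Re (f x x)) (complex.Re (f y y)) => a c /=.
move=> h; nra.
Qed.

Lemma CS x y : Normc.normc (f x y) <= nf x * nf y.
Proof.
rewrite /nf -sqrtrM ?fRe_ge0 //.
rewrite -[Normc.normc _]ger0_norm ?normc_ge0 // -sqrtr_sqr.
exact: ler_wsqrtr (CS2 x y).
Qed.

Lemma fRe_sym x y : complex.Re (f x y + f y x) = 2 * complex.Re (f x y).
Proof. by rewrite (fherm x y); case: (f x y) => a b /=; ring. Qed.

Lemma nf_tri x y : nf (x + y) <= nf x + nf y.
Proof.
rewrite {1}/nf -[nf x + nf y]ger0_norm ?addr_ge0 ?nf_ge0 // -sqrtr_sqr.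
apply: ler_wsqrtr.
rewrite !fDl !fDr !ReD (fherm x y) Re_conj -!nf_sqr.
have h1 := Re_le_normc (f x y); have h2 := CS x y.
have := nf_sqr x; have := nf_sqr y; have := nf_ge0 x; have := nf_ge0 y. nra.
Qed.

Lemma buzano (alpha : R[i]) e x y : f e e = 1 ->
  Normc.normc alpha * Normc.normc (f x e * f e y) <=
  Num.max 1 (Normc.normc (alpha - 1)) * nf x * nf y + Normc.normc (f x y).
Proof.
move=> ee1.
have hm1 : 1 <= Num.max 1 (Normc.normc (alpha - 1)) by rewrite le_max lexx.
have hmb : Normc.normc (alpha - 1) <= Num.max 1 (Normc.normc (alpha - 1)) by rewrite le_max lexx orbT.
move: (Num.max 1 (Normc.normc (alpha - 1))) hm1 hmb => m hm1 hmb.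
move Hp : (f x e) => p.
move Hb : (alpha - 1) => beta.
move Hu : (p *: e) => u.
move Hv : (x - u) => v.
have Hx : x = u + v by rewrite -Hv addrC subrK.
have egy : f (beta *: u - v) y = alpha * (p * f e y) - f x y.
  rewrite fBl fZl -Hv fBl -Hu fZl -Hb; ring.
have eve : f v e = 0 by rewrite -Hv fBl -Hu fZl ee1 mulr1 Hp subrr.
have euv : f u v = 0 by rewrite fherm -Hu fZr eve mulr0 rmorph0.
have evu : f v u = 0 by rewrite fherm euv rmorph0.
have euu : f u u = p * conjc p by rewrite -{1}Hu fZl -Hu fZr ee1 mulr1.
have egg : f (beta *: u - v) (beta *: u - v) = beta * conjc beta * (p * conjc p) + f v v.
  rewrite !fBl !fBr !fZl !fZr euv evu euu; ring.
have exx : f x x = p * conjc p + f v v.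
  by rewrite Hx !fDl !fDr euv evu euu addr0 add0r.
have hg : nf (beta *: u - v) <= m * nf x.
  rewrite /nf -[m]ger0_norm; last by apply: le_trans ler01 hm1.
  rewrite -sqrtr_sqr -sqrtrM ?sqr_ge0 //; apply: ler_wsqrtr.
  have hb0 := normc_ge0 beta.
  have m0 : 0 <= m by exact: le_trans ler01 hm1.
  have hb2 : complex.Re beta ^+ 2 + complex.Im beta ^+ 2 <= m ^+ 2.
    by rewrite -normc_sqr !expr2; rewrite Hb in hmb; exact: (ler_pM hb0 hb0 hmb hmb).
  rewrite egg exx (freal v).
  have w0 := fRe_ge0 v; move: (complex.Re (f v v)) w0 => w w0.
  clear Hp Hu euu exx egg egy Hb hb0 hmb egy.
  case: p => p1 p2; case: beta hb2 => b1 b2 /= hb.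
  have hP : 0 <= p1 ^+ 2 + p2 ^+ 2 by rewrite addr_ge0 ?sqr_ge0.
  have hm2 : 1 <= m ^+ 2 by rewrite expr2; have := ler_pM ler01 ler01 hm1 hm1; rewrite mulr1.
  have k1 := mulr_ge0 (subr_ge0_alt hb) hP.
  have k2 : 0 <= (m ^+ 2 - 1) * w by apply: mulr_ge0 => //; rewrite subr_ge0.
  nra.
rewrite -Normc.normcM.
have -> : alpha * (p * f e y) = f (beta *: u - v) y + f x y by rewrite egy subrK.
apply: le_trans (le_normcD _ _) _; rewrite lerD2r.
apply: le_trans (CS _ _) _; apply: ler_wpM2r => //; exact: nf_ge0.
Qed.


Lemma sym_bounded (M : V -> V) (h : V -> R) (c D : R) :
  (forall u v, f (M u) v = f u (M v)) -> 1 <= c -> 0 <= D ->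
  (forall x, 0 <= h x) -> (forall x, h (M x) <= c * h x) ->
  (forall x, complex.Re (f x x) <= D * h x ^+ 2) ->
  forall x, nf (M x) <= 2 * c * nf x.
Proof.
move=> Msym c1 D0 h0 hM fD x.
have c0 : 0 <= c by apply: le_trans ler01 c1.
have symi : forall j u v, f (iter j M u) v = f u (iter j M v).
  elim=> [//|j IH] u v /=; rewrite Msym IH; congr (f u _).
  by rewrite -iterSr.
pose n j := nf (iter j M x).
have n0 : forall j, 0 <= n j by move=> j; exact: nf_ge0.
have step : forall j, n j ^+ 2 <= n (j + j)%N * n 0%N.
  move=> j; rewrite /n nf_sqr symi -iterD.
  apply: le_trans (Re_le_normc _) _; rewrite mulrC; exact: CS.
have hb : forall j, h (iter j M x) <= c ^+ j * h x.
  elim=> [|j IH] /=; first by rewrite expr0 mul1r.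
  apply: le_trans (hM _) _; rewrite exprS -mulrA; exact: ler_wpM2l.
have nb : forall j, n j ^+ 2 <= D * (c ^+ j * h x) ^+ 2.
  move=> j; rewrite /n nf_sqr; apply: le_trans (fD _) _.
  apply: ler_wpM2l => //; apply: lerXn2r; rewrite ?nnegrE ?mulr_ge0 ?exprn_ge0 //.
have nx1 : n 1%N = nf (M x) by [].
have nx0 : n 0%N = nf x by [].
have [z0|p0] := eqVneq (n 0%N) 0.
  have := step 1%N; rewrite z0 mulr0 => hh.
  have : n 1%N ^+ 2 = 0 by apply/eqP; rewrite eq_le hh sqr_ge0.
  move/eqP; rewrite sqrf_eq0 => /eqP e1.
  by rewrite -nx1 e1 -nx0 z0 !mulr0.
have pos0 : 0 < n 0%N by rewrite lt_def p0 n0.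
have P : forall k, n 1%N ^+ (2 ^ k) * n 0%N <= n (2 ^ k)%N * n 0%N ^+ (2 ^ k).
  elim=> [|k IH]; first by rewrite expn0 !expr1.
  have sq : (n 1%N ^+ (2 ^ k) * n 0%N) ^+ 2 <= (n (2 ^ k)%N * n 0%N ^+ (2 ^ k)) ^+ 2.
    by apply: lerXn2r; rewrite ?nnegrE ?mulr_ge0 ?exprn_ge0.
  have e2 : (2 ^ k.+1 = 2 ^ k + 2 ^ k)%N by rewrite expnS mul2n addnn.
  have st := step (2 ^ k)%N; rewrite -e2 in st.
  have : (n 1%N ^+ (2 ^ k.+1) * n 0%N) * n 0%N <= (n (2 ^ k.+1)%N * n 0%N ^+ (2 ^ k.+1)) * n 0%N.
    apply: le_trans (_ : (n (2 ^ k)%N ^+ 2 * n 0%N ^+ (2 ^ k.+1)) <= _).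
      move: sq; rewrite e2 !exprD !exprMn expr2; congr (_ <= _); ring.
    rewrite e2 exprD [X in _ <= X](_ : _ = (n (2 ^ k + 2 ^ k)%N * n 0%N) * (n 0%N ^+ (2 ^ k) * n 0%N ^+ (2 ^ k))); last by ring.
    by rewrite -exprD ler_wpM2r ?exprn_ge0.
  by rewrite ler_pM2r.
rewrite -nx1 -nx0; apply: (@pt R _ _ _ (D * h x ^+ 2)) => //.
  by rewrite !mulr_ge0 ?invr_ge0 ?exprn_ge0.
move=> k.
have Pk := P k.
have sq : (n 1%N ^+ (2 ^ k) * n 0%N) ^+ 2 <= (n (2 ^ k)%N * n 0%N ^+ (2 ^ k)) ^+ 2.
  by apply: lerXn2r; rewrite ?nnegrE ?mulr_ge0 ?exprn_ge0.
apply: le_trans sq _.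
rewrite exprMn; apply: le_trans (ler_wpM2r (exprn_ge0 _ _) (nb _)) _.
  by rewrite exprn_ge0.
rewrite le_eqVlt; apply/orP; left; apply/eqP.
by rewrite exprMn; ring.
Qed.
End Form.

Section Pol.
Variables (R : realType) (V : lmodType R[i]) (f : V -> V -> R[i]).
Hypothesis flin : forall (a : R[i]) x y z, f (a *: x + y) z = a * f x z + f y z.
Hypothesis f2 : forall (a : R[i]) x y z, f z (a *: x + y) = conjc a * f z x + f z y.
Hypothesis fpos : forall x, 0 <= f x x.

Lemma herm_of_pos x y : f y x = conjc (f x y).
Proof.
have fD2 : forall z u w, f z (u + w) = f z u + f z w.
  by move=> z u w; have := f2 1 u w z; rewrite scale1r rmorph1 mul1r.
have e1 : f (x + y) (x + y) = f x x + f x y + (f y x + f y y).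
  by rewrite (fDl flin) !fD2 addrA.
have e2 : f ((0 +i* 1) *: y + x) ((0 +i* 1) *: y + x) =
   (0 +i* 1) * (conjc (0 +i* 1) * f y y + f y x) + (conjc (0 +i* 1) * f x y + f x x).
  by rewrite flin !f2.
have i1 := ger0_Im (fpos (x + y)); have i2 := ger0_Im (fpos ((0 +i* 1) *: y + x)).
have ix := ger0_Im (fpos x); have iy := ger0_Im (fpos y).
rewrite e1 in i1; rewrite e2 in i2.
move: i1 i2 ix iy; case: (f x x) => a1 a2; case: (f y y) => b1 b2.
case: (f x y) => p1 p2; case: (f y x) => q1 q2 /= => i1 i2 ix iy.
rewrite /conjc; apply/eqP; rewrite eq_complex /=; apply/andP; split; apply/eqP; lra.
Qed.
End Pol.

Lemma sq_bound (R : realType) (n m K : R) : 0 <= n -> 0 <= m -> 0 <= K ->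
  n ^+ 2 <= K * m ^+ 2 -> n <= (K + 1) * m.
Proof.
move=> n0 m0 K0 h; rewrite leNgt; apply/negP => hc.
have p0 : 0 <= (K + 1) * m by rewrite mulr_ge0 // addr_ge0.
have := ltrXn2r 2 p0 hc; rewrite /= => h2.
have : K * m ^+ 2 <= ((K + 1) * m) ^+ 2.
  rewrite exprMn ler_wpM2r ?sqr_ge0 //; nra.
lra.
Qed.

Section Main.
Variables (R : realType) (V : lmodType R[i]) (ip : V -> V -> R[i]) (A S Sstar Ssh : V -> V).
Hypothesis iplin : forall (a : R[i]) x y z, ip (a *: x + y) z = a * ip x z + ip y z.
Hypothesis ipherm : forall x y, ip y x = conjc (ip x y).
Hypothesis ippos : forall x, 0 <= ip x x.
Hypothesis Alin : forall (a : R[i]) x y, A (a *: x + y) = a *: A x + A y.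
Variable cA : R.
Hypothesis Abnd : forall x, hnorm ip (A x) <= cA * hnorm ip x.
Hypothesis Apos : forall x, 0 <= ip (A x) x.
Hypothesis Slin : forall (a : R[i]) x y, S (a *: x + y) = a *: S x + S y.
Variable cS : R.
Hypothesis Sbnd : forall x, hnorm ip (S x) <= cS * hnorm ip x.
Hypothesis Shlin : forall (a : R[i]) x y, Ssh (a *: x + y) = a *: Ssh x + Ssh y.
Variable cH : R.
Hypothesis Shbnd : forall x, hnorm ip (Ssh x) <= cH * hnorm ip x.
Hypothesis Sadj : forall x y, ip (S x) y = ip x (Sstar y).
Hypothesis Ash : forall x, A (Ssh x) = Sstar (A x).

Notation B := (ipA ip A).
Notation nA := (normA ip A).

Lemma Blin (a : R[i]) x y z : B (a *: x + y) z = a * B x z + B y z.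
Proof. by rewrite /ipA Alin iplin. Qed.
Lemma B2 (a : R[i]) x y z : B z (a *: x + y) = conjc a * B z x + B z y.
Proof. by rewrite /ipA ipherm iplin rmorphD rmorphM /= -!ipherm. Qed.
Lemma Bpos x : 0 <= B x x.
Proof. exact: Apos. Qed.
Lemma Bherm x y : B y x = conjc (B x y).
Proof. exact: (herm_of_pos Blin B2 Bpos). Qed.
Lemma Bsh u v : B (Ssh u) v = B u (S v).
Proof. by rewrite /ipA Ash ipherm -Sadj -ipherm. Qed.

Lemma nA_nf x : nA x = nf B x.
Proof. by []. Qed.

Lemma hnorm_ge0 x : 0 <= hnorm ip x.
Proof. exact: sqrtr_ge0. Qed.

Lemma bnd1 (F : V -> V) (c : R) : (forall x, hnorm ip (F x) <= c * hnorm ip x) ->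
  forall x, hnorm ip (F x) <= Num.max c 1 * hnorm ip x.
Proof.
move=> h x; apply: le_trans (h x) _; apply: ler_wpM2r; first exact: hnorm_ge0.
by rewrite le_max lexx.
Qed.

Lemma nA_h x : complex.Re (B x x) <= Num.max cA 0 * hnorm ip x ^+ 2.
Proof.
apply: le_trans (Re_le_normc _) _.
apply: le_trans (CS iplin ipherm ippos (A x) x) _.
rewrite expr2 mulrA; apply: ler_wpM2r; first exact: hnorm_ge0.
apply: le_trans (Abnd x) _; apply: ler_wpM2r; first exact: hnorm_ge0.
by rewrite le_max lexx.
Qed.

Definition Abounded (X : V -> V) := exists K, 0 <= K /\ forall x, nA (X x) <= K * nA x.

Lemma T_Ab : Abounded (fun x => Ssh (S x)).
Proof.
have c1 : 1 <= Num.max cH 1 * Num.max cS 1.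
  have h1 : 1 <= Num.max cH 1 by rewrite le_max lexx orbT.
  have h2 : 1 <= Num.max cS 1 by rewrite le_max lexx orbT.
  by have := ler_pM ler01 ler01 h1 h2; rewrite mulr1.
exists (2 * (Num.max cH 1 * Num.max cS 1)); split.
  by apply: mulr_ge0 => //; apply: le_trans ler01 c1.
move=> x; rewrite !nA_nf.
apply: (sym_bounded Blin Bherm Bpos (M := fun x => Ssh (S x)) (h := hnorm ip) (D := Num.max cA 0) _ c1 _ hnorm_ge0).
- by move=> u v; rewrite Bsh (Bherm (Ssh (S v)) u) Bsh -Bherm.
- by rewrite le_max lexx orbT.
- move=> y; apply: le_trans (bnd1 Shbnd _) _; rewrite -mulrA.
  apply: ler_wpM2l; first by apply: le_trans ler01 _; rewrite le_max lexx orbT.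
  exact: bnd1.
- exact: nA_h.
Qed.

Lemma S_Ab : Abounded S.
Proof.
have [K [K0 hK]] := T_Ab.
exists (K + 1); split; first by rewrite addr_ge0.
move=> x; apply: sq_bound => //; [exact: nf_ge0 | exact: nf_ge0 |].
rewrite nA_nf (nf_sqr Bpos) -Bsh.
apply: le_trans (Re_le_normc _) _; apply: le_trans (CS Blin Bherm Bpos _ _) _.
rewrite expr2 mulrA; apply: ler_wpM2r; [exact: nf_ge0 | exact: hK].
Qed.

Lemma Ab_add (X Y : V -> V) : Abounded X -> Abounded Y -> Abounded (fun x => X x + Y x).
Proof.
move=> [K1 [K10 h1]] [K2 [K20 h2]]; exists (K1 + K2); split; first by rewrite addr_ge0.
move=> x; apply: le_trans (nf_tri Blin Bherm Bpos _ _) _.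
rewrite mulrDl; apply: lerD; [exact: h1 | exact: h2].
Qed.

Lemma Ab_comp (X Y : V -> V) : Abounded X -> Abounded Y -> Abounded (fun x => X (Y x)).
Proof.
move=> [K1 [K10 h1]] [K2 [K20 h2]]; exists (K1 * K2); split; first by rewrite mulr_ge0.
move=> x; apply: le_trans (h1 _) _; rewrite -mulrA; exact: ler_wpM2l.
Qed.

Lemma opnorm_elem (X : V -> V) z : Abounded X -> nA z = 1 -> nA (X z) <= opnormA ip A X.
Proof.
move=> [K [K0 hK]] z1; apply: ub_le_sup; last by exists z.
by exists K => r [w [w1 ->]]; apply: le_trans (hK w) _; rewrite w1 mulr1.
Qed.

Lemma omega_elem (X : V -> V) z : Abounded X -> nA z = 1 ->
  Normc.normc (B (X z) z) <= omegaA ip A X.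
Proof.
move=> [K [K0 hK]] z1; apply: ub_le_sup; last by exists z.
exists K => r [w [w1 ->]]; apply: le_trans (CS Blin Bherm Bpos _ _) _.
change (nA (X w) * nA w <= K); rewrite w1 mulr1; apply: le_trans (hK w) _.
by rewrite w1 mulr1.
Qed.

Lemma pointwise (alpha : R[i]) z : alpha != 0 -> nA z = 1 ->
  Normc.normc (B (S z) z) ^+ 2 + nA (S z) ^+ 4 <=
    omegaA ip A (fun z => Ssh (S z) + S z) ^+ 2
    + 2 / Normc.normc alpha * omegaA ip A (fun z => Ssh (S (S z)))
    + Num.max 1 (Normc.normc (alpha - 1)) / Normc.normc alpha
      * opnormA ip A (fun z => Ssh (S (Ssh (S z))) + Ssh (S z)).
Proof.
move=> a0 z1.
have zz : B z z = 1.
  by rewrite (freal Bpos z) -(nf_sqr Bpos) -nA_nf z1 expr1n.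
have t0 := fRe_ge0 Bpos (S z).
move: (freal Bpos (S z)) t0 (nf_sqr Bpos (S z)).
move: (complex.Re (B (S z) (S z))) => t hSS t0 ht.
have hT : B (Ssh (S z)) z = t%:C by rewrite Bsh.
have e4 : nA (S z) ^+ 4 = t ^+ 2 by rewrite (_ : 4 = 2 * 2)%N // exprM nA_nf ht.
have Ab1 : Abounded (fun z => Ssh (S z) + S z) := Ab_add T_Ab S_Ab.
have Ab2 : Abounded (fun z => Ssh (S (S z))) := Ab_comp T_Ab S_Ab.
have Ab3 : Abounded (fun z => Ssh (S (Ssh (S z))) + Ssh (S z)) := Ab_add (Ab_comp T_Ab T_Ab) T_Ab.
have F1 := omega_elem Ab1 z1; rewrite /= (fDl Blin) hT in F1.
have F2 := buzano Blin Bherm Bpos alpha (S z) (Ssh (S z)) zz.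
have ezT : B z (Ssh (S z)) = t%:C by rewrite Bherm hT conjc_real.
rewrite ezT Normc.normcM normcR ger0_norm // in F2.
have e3 : B (Ssh (S (S z))) z = B (S z) (Ssh (S z)).
  by rewrite Bsh (Bherm (Ssh (S z)) (S z)) Bsh -Bherm.
have F3 := omega_elem Ab2 z1; rewrite /= e3 in F3.
have F4 := opnorm_elem Ab3 z1.
have F5 : 2 * nf B (S z) * nf B (Ssh (S z)) <= opnormA ip A (fun z => Ssh (S (Ssh (S z))) + Ssh (S z)).
  apply: le_trans F4.
  have hb : nf B (Ssh (S z)) ^+ 2 = complex.Re (B (S (Ssh (S z))) (S z)).
    by rewrite (nf_sqr Bpos) Bsh (Bherm (S (Ssh (S z)))) Re_conj.
  have hW : complex.Re (B (Ssh (S (Ssh (S z))) + Ssh (S z)) z) = nf B (S z) ^+ 2 + nf B (Ssh (S z)) ^+ 2.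
    by rewrite (fDl Blin) ReD Bsh hT hb ht addrC.
  have : complex.Re (B (Ssh (S (Ssh (S z))) + Ssh (S z)) z) <= nA (Ssh (S (Ssh (S z))) + Ssh (S z)).
    apply: le_trans (Re_le_normc _) _; apply: le_trans (CS Blin Bherm Bpos _ _) _.
    by rewrite -[nf B z]/(nA z) z1 mulr1.
  rewrite hW => h; have := sqr_ge0 (nf B (S z) - nf B (Ssh (S z))); rewrite /=; nra.
have na0 : 0 < Normc.normc alpha.
  by rewrite lt_def normc_ge0 andbT; apply/eqP => /Normc.eq0_normc /eqP; rewrite (negbTE a0).
have m0 : 0 <= Num.max 1 (Normc.normc (alpha - 1)) by rewrite le_max ler01.
have C := combine t0 (normc_ge0 _) na0 m0 F2 F3 F5.
rewrite e4; apply: le_trans (real_step (B (S z) z) t0) _.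
rewrite -addrA lerD //.
by apply: lerXn2r; rewrite ?nnegrE ?normc_ge0 //; apply: le_trans (normc_ge0 _) F1.
Qed.
End Main.

Local Close Scope complex_scope.

Theorem theorem2p2 (R : realType) (V : lmodType R[i]) (ip : V -> V -> R[i])
  (A S Sstar Ssh : V -> V) (alpha : R[i]) :
  hilbert_space ip ->
  positive_op ip A ->
  bounded_op ip S ->
  is_adjoint ip S Sstar ->
  is_A_sharp ip A S Sstar Ssh ->
  alpha != 0 ->
  dwA ip A S ^+ 2 <=
    omegaA ip A (fun z => Ssh (S z) + S z) ^+ 2
    + 2 / Normc.normc alpha * omegaA ip A (fun z => Ssh (S (S z)))
    + Num.max 1 (Normc.normc (alpha - 1)) / Normc.normc alpha
      * opnormA ip A (fun z => Ssh (S (Ssh (S z))) + Ssh (S z)).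
Proof.
move=> [[iplin ipherm ippos _] _] [[Alin [cA Abnd]] Apos] [Slin [cS Sbnd]] Sadj
  [[Shlin [cH Shbnd]] Ash _] a0.
have hp := pointwise iplin ipherm ippos Alin Abnd Apos Sbnd Shbnd Sadj Ash a0.
move: hp.
set RHS := (X in forall z, _ -> _ <= X) => hp.
have na0 : 0 < Normc.normc alpha.
  by rewrite lt_def normc_ge0 andbT; apply/eqP => /Normc.eq0_normc /eqP; rewrite (negbTE a0).
have RHS0 : 0 <= RHS.
  rewrite /RHS; apply: addr_ge0; first apply: addr_ge0.
  - exact: sqr_ge0.
  - apply: mulr_ge0; first by rewrite divr_ge0 // ltW.
    by apply: sup_ge0' => r [z [_ ->]]; exact: normc_ge0.
  - apply: mulr_ge0; first by apply: divr_ge0; [rewrite le_max ler01 | exact: ltW].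
    by apply: sup_ge0' => r [z [_ ->]]; exact: sqrtr_ge0.
rewrite /dwA.
set E := (X in sup X).
have ub : ubound E (Num.sqrt RHS).
  by move=> r [z [z1 ->]]; apply: ler_wsqrtr; exact: hp.
have d0 : 0 <= sup E by apply: sup_ge0' => r [z [_ ->]]; exact: sqrtr_ge0.
have d1 : sup E <= Num.sqrt RHS.
  case: (pselect (nonempty E)) => [ne|hne]; first exact: ge_sup.
  have -> : E = set0.
    by apply/seteqP; split => r Er //; exfalso; apply: hne; exists r.
  by rewrite sup0 sqrtr_ge0.
have fin : sup E ^+ 2 <= RHS.
  by rewrite -(sqr_sqrtr RHS0); apply: lerXn2r => //; rewrite nnegrE ?sqrtr_ge0.
exact: fin.
Qed.
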